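(* In anonymous graphs of maximum degree $4$, there exists a randomized strategy (an oracle placement of quantum pebbles together with an oblivious agent's measurement-based rule), using at most a single quantum pebble at each node and $D$ quantum pebbles in total, with which the agent finds the treasure in $D$ steps with probability close to $1$, where $D$ is the length of a shortest path from the agent's starting node to the treasure. The agent needs to make $O(\log D)$ measurements at each node.
   Context: Anonymous graph: connected simple undirected graph with unlabelled, indistinguishable nodes; the edges at each node carry distinct local port numbers. An agent starts at a source node and must reach a stationary treasure node; $D$ is the shortest-path distance between them. In each round the agent learns the degree of its current node (and, here, can measure qubits emitted by a quantum pebble at that node), computes, and moves along at most one edge. The agent is oblivious: it retains no memory between rounds. A quantum pebble is a source placed at a node by an oracle (which knows the instance) that repeatedly emits qubits, all in the same quantum state unknown to the agent; the agent can perform projective single-qubit measurements in chosen orthonormal bases on as many emitted copies as it wants. *)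

(* Defs.v *)
From HB Require Import structures.
From mathcomp Require Import all_boot all_algebra.
From mathcomp Require Import reals complex.
Set Implicit Arguments. Unset Strict Implicit. Unset Printing Implicit Defensive.
Import GRing.Theory Num.Theory.
Local Open Scope ring_scope.

(* Nodes: a finite type V.  Node v has degree [deg v] and its incident edges
   carry the distinct local port numbers 0 .. deg v - 1; [nbr v i] is the node
   reached from v through port i. *)

Definition adj (V : finType) (deg : V -> nat) (nbr : forall v, 'I_(deg v) -> V)
  : rel V := fun u w => [exists i : 'I_(deg u), nbr u i == w].

Definition port_graph (V : finType) (deg : V -> nat)
    (nbr : forall v, 'I_(deg v) -> V) : Prop :=
  [/\ (forall v, injective (@nbr v)),                      (* no multi-edges, distinct ports *)
      (forall v i, nbr v i != v),
      (forall v i, exists j, nbr (nbr v i) j = v)          (* undirected *)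
    & (forall u w, connect (adj nbr) u w)].

Fixpoint reach (V : finType) (deg : V -> nat) (nbr : forall v, 'I_(deg v) -> V)
    (k : nat) (u w : V) : bool :=
  match k with
  | 0 => u == w
  | k'.+1 => [exists i : 'I_(deg u), reach nbr k' (nbr u i) w]
  end.

Definition is_dist (V : finType) (deg : V -> nat) (nbr : forall v, 'I_(deg v) -> V)
    (s t : V) (D : nat) : Prop :=
  reach nbr D s t /\ forall k, (k < D)%N -> ~~ reach nbr k s t.

Local Open Scope complex_scope.

Definition qvec (R : realType) := (R[i] * R[i])%type.

Definition qdot (R : realType) (u v : qvec R) : R[i] :=
  (u.1)^* * v.1 + (u.2)^* * v.2.

Definition csq (R : realType) (z : R[i]) : R :=
  let: a +i* b := z in a ^+ 2 + b ^+ 2.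

Definition qstate (R : realType) (psi : qvec R) : Prop := qdot psi psi = 1.

(* orthonormal basis of C^2 (a projective single-qubit measurement) *)
Definition qbasis (R : realType) := (qvec R * qvec R)%type.
Definition orthonormal (R : realType) (b : qbasis R) : Prop :=
  [/\ qdot b.1 b.1 = 1, qdot b.2 b.2 = 1 & qdot b.1 b.2 = 0].

(* Born rule: probability of outcome [o] (false = b.1, true = b.2) *)
Definition born (R : realType) (b : qbasis R) (o : bool) (psi : qvec R) : R :=
  csq (qdot (if o then b.2 else b.1) psi).

(* In each round the agent sees the degree d of its current node and whether a
   pebble is there.  If a pebble is there it measures [nmeas] emitted copies,
   the basis of the j-th measurement being chosen (adaptively) from d and the
   j previous outcomes; then it chooses a port (Some i) or stays (None), as a
   function of d and of the observation (None = no pebble, Some o = outcomes).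
   No memory is kept between rounds. *)
Record agent (R : realType) := Agent {
  nmeas : nat;
  meas : nat -> seq bool -> qbasis R;
  move : forall d : nat, option (seq bool) -> option 'I_d
}.

Definition valid_agent (R : realType) (A : agent R) : Prop :=
  forall d s, orthonormal (meas A d s).

Section Run.
Variables (R : realType) (V : finType) (deg : V -> nat)
  (nbr : forall v, 'I_(deg v) -> V) (t : V) (peb : V -> option (qvec R))
  (A : agent R).

Definition next (v : V) (obs : option (seq bool)) : V :=
  match move A (deg v) obs with None => v | Some i => @nbr v i end.

Definition outcome_prob (d : nat) (psi : qvec R) (o : (nmeas A).-tuple bool) : R :=
  \prod_(j < nmeas A) born (meas A d (take j o)) (tnth o j) psi.

Fixpoint succ_prob (n : nat) (v : V) : R :=
  if v == t then 1 else
  match n with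
  | 0 => 0
  | n'.+1 =>
    match peb v with
    | None => succ_prob n' (next v None)
    | Some psi => \sum_(o : (nmeas A).-tuple bool)
                     outcome_prob (deg v) psi o * succ_prob n' (next v (Some (val o)))
    end
  end.
End Run.

(* Main.v *)
Require Import Defs.
From HB Require Import structures.
From mathcomp Require Import all_boot all_algebra.
From mathcomp Require Import all_order reals complex.
From mathcomp Require Import ring lra zify.
Import Order.TTheory GRing.Theory Num.Theory.
Local Open Scope ring_scope.

Section Q.
Variable R : realType.
Local Open Scope complex_scope.
Definition e0 : qvec R := (1, 0).
Definition e1 : qvec R := (0, 1).
Definition hh : R[i] := (2^-1 +i* 2^-1).
Definition pl : qvec R := (hh, hh).

Lemma dot00 : qdot e0 e0 = 1.
Proof. rewrite /qdot /e0 /=. simpc. by []. Qed.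
Lemma dot11 : qdot e1 e1 = 1.
Proof. rewrite /qdot /e1 /=. simpc. by []. Qed.
Lemma dot01 : qdot e0 e1 = 0.
Proof. rewrite /qdot /e0 /e1 /=. simpc. by []. Qed.
Lemma dotpp : qdot pl pl = 1.
Proof.
rewrite /qdot /pl /hh /=. simpc. apply/eqP; rewrite eq_complex /= eqxx andbT.
by apply/eqP; field.
Qed.
Lemma csq1 : csq (1 : R[i]) = 1.
Proof. by rewrite /csq /= expr1n expr0n addr0. Qed.
Lemma born0p : csq (qdot e0 pl) = 2^-1.
Proof. rewrite /qdot /pl /hh /e0 /=. simpc. rewrite /csq; by field. Qed.
Lemma born1p : csq (qdot e1 pl) = 2^-1.
Proof. rewrite /qdot /pl /hh /e1 /=. simpc. rewrite /csq; by field. Qed.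
Lemma csq_ge0 (z : R[i]) : 0 <= csq z.
Proof. case: z => a b /=; by rewrite addr_ge0 // sqr_ge0. Qed.
End Q.
Definition code (obs : option (seq bool)) : nat :=
  match obs with
  | None => 0
  | Some s => if all negb s then 1 else if all id s then 2 else 3
  end.

Definition agt (R : realType) (m : nat) : agent R :=
  @Agent R m (fun _ _ => (e0 R, e1 R)) (fun d obs => insub (code obs)).

Section Gen.
Variables (R : realType) (V : finType) (deg : V -> nat)
  (nbr : forall v, 'I_(deg v) -> V) (t : V) (peb : V -> option (qvec R))
  (A : agent R).

Lemma outcome_ge0 d psi o : 0 <= outcome_prob (A:=A) d psi o.
Proof. by apply: prodr_ge0 => j _; apply: csq_ge0. Qed.

Lemma succ_ge0 n v : 0 <= succ_prob nbr t peb A n v.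
Proof.
elim: n v => [|n IH] v /=; case: ifP => // _.
case: (peb v) => [psi|] //.
by apply: sumr_ge0 => o _; apply: mulr_ge0; [apply: outcome_ge0 | apply: IH].
Qed.

Lemma run_lb (eps : R) (p : nat -> V) (D : nat) :
  0 <= eps -> eps <= 1 -> p D = t ->
  (forall j, (j < D)%N -> p j != t /\
     match peb (p j) with
     | None => Defs.next nbr A (p j) None = p j.+1
     | Some psi => 1 - eps <= \sum_(o | Defs.next nbr A (p j) (Some (val o)) == p j.+1)
                               outcome_prob (A:=A) (deg (p j)) psi o
     end) ->
  forall n, (n <= D)%N -> (1 - eps) ^+ n <= succ_prob nbr t peb A n (p (D - n)%N).
Proof.
move=> e0 e1 pD H; elim=> [|n IH] nD.
  by rewrite subn0 pD /= eqxx expr0.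
have jD : (D - n.+1 < D)%N by lia.
have Ej : (D - n.+1)%N.+1 = (D - n)%N by lia.
have IH' := IH (ltnW nD).
have sg : 0 <= succ_prob nbr t peb A n (p (D - n)%N) by apply: succ_ge0.
have pe : 0 <= (1 - eps) ^+ n by apply: exprn_ge0; lra.
case: (H _ jD) => ne; rewrite /= (negbTE ne) Ej.
case: (peb _) => [psi|] hm.
  rewrite (bigID (fun o => Defs.next nbr A (p (D - n.+1)%N) (Some (val o)) == p (D - n)%N)) /=.
  set S2 := (X in _ <= _ + X).
  have S2ge : 0 <= S2 by apply: sumr_ge0 => o _; apply: mulr_ge0; [apply: outcome_ge0 | apply: succ_ge0].
  rewrite (eq_bigr (fun o => outcome_prob (A:=A) (deg (p (D - n.+1)%N)) psi o * succ_prob nbr t peb A n (p (D - n)%N))); last first.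
    by move=> o /eqP ->.
  rewrite -mulr_suml exprS.
  rewrite -[X in X <= _]addr0; apply: lerD => //.
  by apply: ler_pM => //; lra.
rewrite hm exprS.
apply: le_trans IH'.
by rewrite ler_piMl //; lra.
Qed.
End Gen.
Set Implicit Arguments. Unset Strict Implicit.
Section G.
Variables (V : finType) (deg : V -> nat) (nbr : forall v, 'I_(deg v) -> V) (t : V).

Lemma dist_step v n : is_dist nbr v t n.+1 -> exists i, is_dist nbr (@nbr v i) t n.
Proof.
case=> /= /existsP [i Hi] Hm; exists i; split => // k kn; apply/negP => Hk.
by move: (Hm k.+1 kn) => /= /existsP; apply; exists i.
Qed.

Lemma dist_uniq v a b : is_dist nbr v t a -> is_dist nbr v t b -> a = b.
Proof.
case=> Ha Ma [Hb Mb]; case: (ltngtP a b) => // h.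
  by move: (Mb _ h); rewrite Ha.
by move: (Ma _ h); rewrite Hb.
Qed.

Lemma dist_neq v n : is_dist nbr v t n.+1 -> v != t.
Proof. by case=> _ M; exact: (M 0%N isT). Qed.

Lemma path_ex D s : is_dist nbr s t D ->
  exists (p : nat -> V) (port : nat -> nat),
    [/\ p 0%N = s, p D = t &
    forall j, (j < D)%N -> is_dist nbr (p j) t (D - j) /\
       exists i : 'I_(deg (p j)), val i = port j /\ @nbr (p j) i = p j.+1].
Proof.
elim: D s => [|D IH] s Hs.
  exists (fun _ => s), (fun _ => 0%N); split => //.
  by case: Hs => /= /eqP.
have [i Hi] := dist_step Hs.
have [p [port [p0 pD Hp]]] := IH _ Hi.
exists (fun k => if k is k'.+1 then p k' else s).
exists (fun k => if k is k'.+1 then port k' else val i).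
split => //.
case=> [|j] jD /=.
  by split => //; exists i; split => //; rewrite p0.
have [H1 H2] := Hp j jD; split; first by rewrite subSS.
exact: H2.
Qed.
End G.
Unset Implicit Arguments.
Lemma all_negb_nseq (s : seq bool) : all negb s -> s = nseq (size s) false.
Proof. by elim: s => //= b s IH; case: b => //= /IH <-. Qed.
Lemma all_id_nseq (s : seq bool) : all id s -> s = nseq (size s) true.
Proof. by elim: s => //= b s IH; case: b => //= /IH <-. Qed.

Section Ag.
Variables (R : realType) (m : nat).
Local Notation A := (agt R m).

Lemma next_code (V : finType) (deg : V -> nat) (nbr : forall v, 'I_(deg v) -> V)
  v (i : 'I_(deg v)) obs : code obs = val i -> Defs.next nbr A v obs = nbr v i.
Proof. by move=> h; rewrite /Defs.next /= h valK. Qed.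

Lemma prob_e0 d : outcome_prob (A:=A) d (e0 R) (nseq_tuple m false) = 1.
Proof.
rewrite /outcome_prob; apply: big1 => j _.
by rewrite tnth_nseq /born /=; ring.
Qed.

Lemma prob_e1 d : outcome_prob (A:=A) d (e1 R) (nseq_tuple m true) = 1.
Proof.
rewrite /outcome_prob; apply: big1 => j _.
by rewrite tnth_nseq /born /=; ring.
Qed.

Lemma prob_pl d o : outcome_prob (A:=A) d (pl R) o = 2^-1 ^+ m.
Proof.
rewrite /outcome_prob (eq_bigr (fun _ => 2^-1)); last first.
  by move=> j _; rewrite /born; case: (tnth o j) => /=; field.
by rewrite prodr_const card_ord.
Qed.

Lemma mixed_sum (P : pred (m.-tuple bool)) : (0 < m)%N ->
  (forall o, code (Some (val o)) = 3%N -> P o) ->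
  1 - 2 * 2^-1 ^+ m <= \sum_(o | P o) (2^-1 ^+ m : R).
Proof.
move=> m0 HP.
rewrite (eq_bigl (fun o => o \in P)) // sumr_const.
have hC : (#|[predC P]| <= 2)%N.
  apply: (@leq_trans #|pred2 (nseq_tuple m false) (nseq_tuple m true)|); last first.
    by rewrite card2; case: (_ != _).
  apply: subset_leq_card; apply/subsetP => o; rewrite !inE /= => nP.
  apply/orP; move: (HP o); rewrite /=.
  case: ifP => [/all_negb_nseq h _| _]; first by left; apply/eqP/val_inj; rewrite /= h size_tuple.
  case: ifP => [/all_id_nseq h _| _]; first by right; apply/eqP/val_inj; rewrite /= h size_tuple.
  by move=> /(_ erefl) hp; exfalso; move/negP: nP; apply.
have hT := cardC P; rewrite card_tuple card_bool in hT.
have hN : (2 ^ m <= #|P| + 2)%N by rewrite -hT leq_add2l.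
have c1 : (2^-1 : R) ^+ m * (2 ^ m)%:R = 1.
  by rewrite natrX -exprMn mulVf ?expr1n // pnatr_eq0.
have cp : (0 : R) <= 2^-1 ^+ m by rewrite exprn_ge0 // invr_ge0 ler0n.
have : (2 ^ m)%:R <= (#|P| + 2)%:R :> R by rewrite ler_nat.
rewrite natrD => h.
have := ler_wpM2l cp h; rewrite c1 mulrDr -mulr_natr.
lra.
Qed.
End Ag.
Lemma bern (R : realType) (e : R) n : 0 <= e -> e <= 1 -> 1 - n%:R * e <= (1 - e) ^+ n.
Proof.
move=> e0 e1; elim: n => [|n IH]; first by rewrite mul0r subr0 expr0.
have h := ler_wpM2l (_ : 0 <= 1 - e) IH.
rewrite exprS; apply: le_trans (h _); last by lra.
have : 0 <= n%:R * (e * e) by apply: mulr_ge0; [apply: ler0n | apply: mulr_ge0].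
rewrite -natr1 mulrDl mul1r; nra.
Qed.

Lemma num_bound (R : realType) (delta : R) (K D m : nat) :
  0 < delta -> 2 <= delta * (2 ^ K)%:R -> (2 ^ (trunc_log 2 D).+1 * 2 ^ K <= 2 ^ m)%N ->
  D%:R * (2 * 2^-1 ^+ m) <= delta.
Proof.
move=> dp hK hm.
have hD : (D < 2 ^ (trunc_log 2 D).+1)%N by apply: trunc_log_ltn.
set a := (2 ^ (trunc_log 2 D).+1)%N in hD hm.
have xp : (0 : R) < (2 ^ m)%:R by rewrite ltr0n expn_gt0.
rewrite exprVn -natrX.
have h1 : (D%:R : R) <= a%:R by rewrite ler_nat ltnW.
have h2 : ((a * 2 ^ K)%N%:R : R) <= (2 ^ m)%:R by rewrite ler_nat.
rewrite natrM in h2.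
rewrite mulrA ler_pdivrMr //.
have ap : (0 : R) <= a%:R by apply: ler0n.
have h3 := ler_wpM2l ap hK.
nra.
Qed.
Theorem theorem5 :
  forall (R : realType) (delta : R), 0 < delta ->
  exists (c : nat) (A : nat -> agent R),
    forall D : nat,
      valid_agent (A D) /\
      (nmeas (A D) <= c * (trunc_log 2 D).+1)%N /\
      forall (V : finType) (deg : V -> nat) (nbr : forall v, 'I_(deg v) -> V)
             (s t : V),
        port_graph nbr -> (forall v, (deg v <= 4)%N) -> is_dist nbr s t D ->
        exists peb : V -> option (qvec R),
          (forall v psi, peb v = Some psi -> qstate psi) /\
          (#|[set v | peb v != None]| <= D)%N /\
          1 - delta <= succ_prob nbr t peb (A D) D s.
Proof.
move=> R delta dp.
set N := Num.Def.archi_bound (2 / delta).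
have HN : 2 / delta < N%:R by apply: archi_boundP; apply: divr_ge0 => //; apply: ltW.
have hK : 2 <= delta * (2 ^ N)%:R.
  have : (N < 2 ^ N)%N by apply: ltn_expl.
  rewrite -(ltr_nat R) => h.
  rewrite -ler_pdivrMl //; lra.
exists N.+1, (fun D => agt R (N.+1 * (trunc_log 2 D).+1)) => D.
set m := (N.+1 * (trunc_log 2 D).+1)%N.
have m0 : (0 < m)%N by rewrite muln_gt0.
split.
  by move=> d s; split; [apply: dot00 | apply: dot11 | apply: dot01].
split; first by [].
move=> V deg nbr s t pg hdeg hd.
have mdef : m = (N.+1 * (trunc_log 2 D).+1)%N by [].
clearbody m.
have [p [port [p0 pD Hp]]] := path_ex hd.
pose st := fun k : nat => match k with 0 => None | 1 => Some (e0 R) | 2 => Some (e1 R) | _ => Some (pl R) end.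
exists (fun u => match [pick j : 'I_D | p j == u] with Some j => st (port j) | None => None end).
split.
  move=> v psi; case: pickP => // j _.
  by case: (port j) => [|[|[|k]]] //= [<-]; rewrite /qstate ?dot00 ?dot11 ?dotpp.
split.
  apply: (@leq_trans #|[set p (val j) | j : 'I_D]|).
    apply: subset_leq_card; apply/subsetP => v; rewrite inE.
    case: pickP => // j /eqP <- _; apply/imsetP; exists j => //.
  by apply: leq_trans (leq_imset_card _ _) _; rewrite card_ord.
set peb := (fun u => _).
set eps : R := 2 * 2^-1 ^+ m.
have eps0 : 0 <= eps by rewrite mulr_ge0 // exprn_ge0 // invr_ge0 ler0n.
have eps1 : eps <= 1.
  rewrite /eps exprVn -natrX ler_pdivrMr ?ltr0n ?expn_gt0 // mul1r ler_nat.
  by move: m0; case: (m) => // k _; rewrite expnS leq_pmulr // expn_gt0.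
have Hc : forall j, (j < D)%N -> p j != t /\
     match peb (p j) with
     | None => Defs.next nbr (agt R m) (p j) None = p j.+1
     | Some psi => 1 - eps <= \sum_(o | Defs.next nbr (agt R m) (p j) (Some (val o)) == p j.+1)
                               outcome_prob (A:=agt R m) (deg (p j)) psi o
     end.
  move=> j jD; have [hdj [i [hi hnext]]] := Hp j jD.
  split.
    have E : (D - j)%N = (D - j).-1.+1 by lia.
    by rewrite E in hdj; apply: dist_neq hdj.
  have -> : peb (p j) = st (port j).
    rewrite /peb; case: pickP => [k /eqP hk | hn]; last first.
      by have := hn (Ordinal jD); rewrite /= eqxx.
    have [hk1 _] := Hp k (ltn_ord k); rewrite hk in hk1.
    have kj := dist_uniq hk1 hdj.
    have kD := ltn_ord k.
    have -> : val k = j by rewrite -[val k]/(nat_of_ord k); lia.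
    by [].
  rewrite -hi; have hid := hdeg (p j); have ilt : (val i < deg (p j))%N by exact: ltn_ord i.
  have nc : forall obs, code obs = val i -> Defs.next nbr (agt R m) (p j) obs = p j.+1.
    by move=> obs h; rewrite (@next_code R m V deg nbr (p j) i obs h).
  have mz : (m == 0)%N = false by case: (m) m0.
  move: hid ilt nc; case: (val i) => [|[|[|[|k]]]] hid ilt nc /=.
  - by apply: nc.
  - rewrite (bigD1 (nseq_tuple m false)) /=; last by rewrite nc ?eqxx // /code /= all_nseq orbT.
    apply: le_trans (_ : 1 <= _); first lra.
    rewrite prob_e0 lerDl; apply: sumr_ge0 => *; apply: outcome_ge0.
  - rewrite (bigD1 (nseq_tuple m true)) /=; last by rewrite nc ?eqxx // /code /= !all_nseq mz.
    apply: le_trans (_ : 1 <= _); first lra.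
    rewrite prob_e1 lerDl; apply: sumr_ge0 => *; apply: outcome_ge0.
  - rewrite (eq_bigr (fun _ => 2^-1 ^+ m)); last by move=> o _; apply: prob_pl.
    by apply: mixed_sum => // o ho; rewrite nc.
  - lia.
have hm : (2 ^ (trunc_log 2 D).+1 * 2 ^ N <= 2 ^ m)%N.
  rewrite -expnD; apply: leq_pexp2l => //; rewrite mdef; nia.
have key := @run_lb R V deg nbr t peb (agt R m) eps p D eps0 eps1 pD Hc D (leqnn D).
rewrite subnn p0 in key.
have b := @bern R eps D eps0 eps1.
have nb := @num_bound R delta N D m dp hK hm.
rewrite -/eps in nb.
lra.
Qed.
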